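(* Let $T$ be a c.n.u. contraction on $H$, let $(H_+,H_-,\Gamma_+,\Gamma_-)$ be a boundary quadruple for $A_T^{\perp_s}$ with contractive Weyl function $B$ and $\gamma$-fields $\gamma_\pm$, and let $\varphi_+=pr_1\circ\gamma_+$, $\varphi_-=pr_2\circ\gamma_-$. Then: (1) for $\lambda,\mu\in\mathbb{D}_+$ and $x,y\in H_+$: $(\varphi_+(\lambda)x,\varphi_+(\mu)y)_H=\frac{1}{1-\lambda\bar\mu}((I-B(\mu)^*B(\lambda))x,y)_{H_+}$; (2) for $\lambda,\mu\in\mathbb{D}_-$ and $x,y\in H_-$: $(\varphi_-(\lambda)x,\varphi_-(\mu)y)_H=\frac{1}{1-\lambda\bar\mu}((I-B(\bar\mu)B(\bar\lambda)^* )x,y)_{H_-}$; (3) for $\lambda\in\mathbb{D}_+$, $\mu\in\mathbb{D}_-$, $x\in H_+$, $y\in H_-$: $(\varphi_+(\lambda)x,\varphi_-(\mu)y)_H=\frac{1}{\lambda-\bar\mu}((B(\lambda)-B(\bar\mu))x,y)_{H_-}$, where for $\lambda=\bar\mu$ the right-hand side is understood as its limit.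
   Context: $H$ is an infinite-dimensional separable complex Hilbert space; $T\in\mathbb{B}(H)$, $\|T\|\le1$, is completely non-unitary. $\mathbb{K}=\ker(I-T^*T)$. $\mathbb{H}=H\oplus_\perp H$ with $[(x_1,x_2),(y_1,y_2)]=i(x_1,y_1)_H-i(x_2,y_2)_H$; $S^{\perp_s}=\{a:[a,b]=0\ \forall b\in S\}$; $A_T=\{(x,Tx):x\in\mathbb{K}\}$. $\mathbb{D}_\pm$ are two copies of the open unit disc (coordinates $\lambda$ with $|\lambda|<1$); for $\lambda\in\mathbb{D}_\pm$, $\bar\lambda$ denotes the complex conjugate coordinate, regarded as a point of $\mathbb{D}_\mp$ where appropriate. $N_\lambda=\{(x,\lambda x):x\in H\}\cap A_T^{\perp_s}$ for $\lambda\in\mathbb{D}_+$, $N_\lambda=\{(\lambda x,x):x\in H\}\cap A_T^{\perp_s}$ for $\lambda\in\mathbb{D}_-$. A boundary quadruple for $A_T^{\perp_s}$ is $(H_+,H_-,\Gamma_+,\Gamma_-)$, $H_\pm$ Hilbert spaces, $\Gamma_\pm:A_T^{\perp_s}\to H_\pm$ linear, with $(\Gamma_+,\Gamma_-)$ bounded, surjective onto $H_+\oplus_\perp H_-$, kernel $A_T$, and $[a,b]=i(\Gamma_+a,\Gamma_+b)_{H_+}-i(\Gamma_-a,\Gamma_-b)_{H_-}$. For such a quadruple: for $\lambda\in\mathbb{D}_+$, $\Gamma_+|_{N_\lambda}$ is a bijection onto $H_+$ and there is a unique $B(\lambda)\in\mathbb{B}(H_+,H_-)$ with $\Gamma_-a=B(\lambda)\Gamma_+a$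 for $a\in N_\lambda$; for $\lambda\in\mathbb{D}_-$, $\Gamma_-|_{N_\lambda}$ is a bijection onto $H_-$ and $\Gamma_+a=B(\bar\lambda)^*\Gamma_-a$ for $a\in N_\lambda$. $B$ is holomorphic on $\mathbb{D}_+$ with $\|B(\lambda)\|<1$ (the contractive Weyl function). The $\gamma$-fields are $\gamma_+(\lambda)x\in N_\lambda$ with $\Gamma_+\gamma_+(\lambda)x=x$ ($\lambda\in\mathbb{D}_+$, $x\in H_+$) and $\gamma_-(\lambda)x\in N_\lambda$ with $\Gamma_-\gamma_-(\lambda)x=x$ ($\lambda\in\mathbb{D}_-$, $x\in H_-$). $pr_1,pr_2$ are the projections of $\mathbb{H}$ onto its first and second copy of $H$. *)

(* Defs.v *)
From HB Require Import structures.
From mathcomp Require Import all_boot all_order all_algebra.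
From mathcomp Require Import complex.
From mathcomp Require Import all_classical all_reals topology normedtype.
Import Order.TTheory GRing.Theory Num.Theory.
Import numFieldNormedType.Exports.

Set Implicit Arguments.
Unset Strict Implicit.
Unset Printing Implicit Defensive.

Local Open Scope ring_scope.

(* The complex numbers R[i] (R a real field) carry their usual metric topology,
   induced by the modulus (the normed module structure of R[i] over itself). *)
HB.instance Definition _ (R : rcfType) := NormedModule.copy R[i] (R[i])^o.

Definition iC {R : rcfType} : R[i] := Complex 0 1.

(* Convention: (x,y) is linear in x and conjugate-linear in y.         *)
(* Complex numbers are ordered by the partial order of R[i]            *)
(* (a <= b iff b - a is real and nonnegative).                         *)

Definition inner_product {R : rcfType} {V : lmodType R[i]} (ip : V -> V -> R[i]) : Prop :=
  [/\ forall x y z, ip (x + y) z = ip x z + ip y z,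
      forall (a : R[i]) x y, ip (a *: x) y = a * ip x y,
      forall x y, ip y x = conjc (ip x y),
      forall x, 0 <= ip x x
    & forall x, ip x x = 0 -> x = 0].

Definition ip_converges {R : rcfType} {V : lmodType R[i]} (ip : V -> V -> R[i])
    (u : nat -> V) (x : V) : Prop :=
  forall e : R, 0 < e -> exists N : nat, forall n, (N <= n)%N ->
    ip (u n - x) (u n - x) < e%:C%C.

Definition ip_cauchy {R : rcfType} {V : lmodType R[i]} (ip : V -> V -> R[i])
    (u : nat -> V) : Prop :=
  forall e : R, 0 < e -> exists N : nat, forall m n, (N <= m)%N -> (N <= n)%N ->
    ip (u m - u n) (u m - u n) < e%:C%C.

Definition hilbert {R : rcfType} {V : lmodType R[i]} (ip : V -> V -> R[i]) : Prop :=
  inner_product ip /\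
  forall u : nat -> V, ip_cauchy ip u -> exists x, ip_converges ip u x.

Definition ip_separable {R : rcfType} {V : lmodType R[i]} (ip : V -> V -> R[i]) : Prop :=
  exists d : nat -> V, forall (x : V) (e : R), 0 < e ->
    exists n, ip (x - d n) (x - d n) < e%:C%C.

Definition infinite_dimensional {R : rcfType} (V : lmodType R[i]) : Prop :=
  forall n : nat, exists v : 'I_n -> V,
    forall c : 'I_n -> R[i], \sum_(i < n) c i *: v i = 0 -> forall i, c i = 0.

Definition bounded_op {R : rcfType} {V W : lmodType R[i]}
    (ipV : V -> V -> R[i]) (ipW : W -> W -> R[i]) (f : V -> W) : Prop :=
  exists M : R, forall x, ipW (f x) (f x) <= (M%:C)%C * ipV x x.

Definition adjoint_of {R : rcfType} {V W : lmodType R[i]}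
    (ipV : V -> V -> R[i]) (ipW : W -> W -> R[i]) (f : V -> W) (g : W -> V) : Prop :=
  forall x y, ipW (f x) y = ipV x (g y).

Definition contractive_op {R : rcfType} {V : lmodType R[i]} (ip : V -> V -> R[i])
    (T : V -> V) : Prop :=
  forall x, ip (T x) (T x) <= ip x x.

Definition lin_subspace {R : rcfType} {V : lmodType R[i]} (M : V -> Prop) : Prop :=
  M 0 /\ forall (a : R[i]) x y, M x -> M y -> M (a *: x + y).

Definition ip_closed_set {R : rcfType} {V : lmodType R[i]} (ip : V -> V -> R[i])
    (M : V -> Prop) : Prop :=
  forall (u : nat -> V) x, (forall n, M (u n)) -> ip_converges ip u x -> M x.

(* T (with adjoint Tstar) is completely non-unitary: there is no nonzero closed
   lin_subspace M reducing T such that T restricted to M is unitary (i.e. T|M and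
   T^*|M = (T|M)^* are both isometric on M). *)
Definition cnu {R : rcfType} {V : lmodType R[i]} (ip : V -> V -> R[i])
    (T Tstar : V -> V) : Prop :=
  forall M : V -> Prop, lin_subspace M -> ip_closed_set ip M ->
    (forall x, M x -> M (T x) /\ M (Tstar x)) ->
    (forall x, M x -> ip (T x) (T x) = ip x x /\ ip (Tstar x) (Tstar x) = ip x x) ->
    forall x, M x -> x = 0.

Definition kbracket {R : rcfType} {V : lmodType R[i]} (ip : V -> V -> R[i])
    (a b : V * V) : R[i] :=
  iC * ip a.1 b.1 - iC * ip a.2 b.2.

Definition sperp {R : rcfType} {V : lmodType R[i]} (ip : V -> V -> R[i])
    (S : V * V -> Prop) : V * V -> Prop :=
  fun a => forall b, S b -> kbracket ip a b = 0.

Definition defect_kernel {R : rcfType} {V : lmodType R[i]} (T Tstar : V -> V) : V -> Prop :=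
  fun x => x - Tstar (T x) = 0.

Definition A_T {R : rcfType} {V : lmodType R[i]} (T Tstar : V -> V) : V * V -> Prop :=
  fun a => exists x, defect_kernel T Tstar x /\ a = (x, T x).

(* Boundary quadruple (H+, H-, G+, G-) for A_T^{perp_s}.  The maps G+- are
   given as total functions on HH; only their restriction to A_T^{perp_s}
   matters. *)
Definition boundary_quadruple {R : rcfType} {H Hp Hm : lmodType R[i]}
    (ipH : H -> H -> R[i]) (T Tstar : H -> H)
    (ipP : Hp -> Hp -> R[i]) (ipM : Hm -> Hm -> R[i])
    (Gp : H * H -> Hp) (Gm : H * H -> Hm) : Prop :=
  let D := sperp ipH (A_T T Tstar) in
  [/\ hilbert ipP /\ hilbert ipM,
      (forall (c : R[i]) a b, D a -> D b ->
         Gp (c *: a + b) = c *: Gp a + Gp b /\ Gm (c *: a + b) = c *: Gm a + Gm b),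
      (exists M : R, forall a, D a ->
         ipP (Gp a) (Gp a) + ipM (Gm a) (Gm a) <= (M%:C)%C * (ipH a.1 a.1 + ipH a.2 a.2))
    &
      ((forall x y, exists a, D a /\ Gp a = x /\ Gm a = y) /\
      (forall a, (D a /\ Gp a = 0 /\ Gm a = 0) <-> A_T T Tstar a) /\
      (forall a b, D a -> D b ->
         kbracket ipH a b = iC * ipP (Gp a) (Gp b) - iC * ipM (Gm a) (Gm b)))].

Definition Nplus {R : rcfType} {H : lmodType R[i]} (ipH : H -> H -> R[i])
    (T Tstar : H -> H) (l : R[i]) : H * H -> Prop :=
  fun a => (exists x, a = (x, l *: x)) /\ sperp ipH (A_T T Tstar) a.

Definition Nminus {R : rcfType} {H : lmodType R[i]} (ipH : H -> H -> R[i])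
    (T Tstar : H -> H) (l : R[i]) : H * H -> Prop :=
  fun a => (exists x, a = (l *: x, x)) /\ sperp ipH (A_T T Tstar) a.

Definition weyl_function {R : rcfType} {H Hp Hm : lmodType R[i]}
    (ipH : H -> H -> R[i]) (T Tstar : H -> H)
    (ipP : Hp -> Hp -> R[i]) (ipM : Hm -> Hm -> R[i])
    (Gp : H * H -> Hp) (Gm : H * H -> Hm)
    (B : R[i] -> Hp -> Hm) (Bstar : R[i] -> Hm -> Hp) : Prop :=
  forall l : R[i], `|l| < 1 ->
    [/\ linear (B l), bounded_op ipP ipM (B l), adjoint_of ipP ipM (B l) (Bstar l)
      & forall a, Nplus ipH T Tstar l a -> Gm a = B l (Gp a)].

Definition gamma_plus {R : rcfType} {H Hp : lmodType R[i]}
    (ipH : H -> H -> R[i]) (T Tstar : H -> H) (Gp : H * H -> Hp)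
    (gp : R[i] -> Hp -> H * H) : Prop :=
  forall l : R[i], `|l| < 1 -> forall x, Nplus ipH T Tstar l (gp l x) /\ Gp (gp l x) = x.

Definition gamma_minus {R : rcfType} {H Hm : lmodType R[i]}
    (ipH : H -> H -> R[i]) (T Tstar : H -> H) (Gm : H * H -> Hm)
    (gm : R[i] -> Hm -> H * H) : Prop :=
  forall l : R[i], `|l| < 1 -> forall x, Nminus ipH T Tstar l (gm l x) /\ Gm (gm l x) = x.

Definition phi_plus {R : rcfType} {H Hp : lmodType R[i]} (gp : R[i] -> Hp -> H * H)
  (l : R[i]) (x : Hp) : H := (gp l x).1.
Definition phi_minus {R : rcfType} {H Hm : lmodType R[i]} (gm : R[i] -> Hm -> H * H)
  (l : R[i]) (x : Hm) : H := (gm l x).2.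

(* Main.v *)
Require Import Defs.
From HB Require Import structures.
From mathcomp Require Import all_boot all_order all_algebra.
From mathcomp Require Import complex.
From mathcomp Require Import all_classical all_reals topology normedtype.
From mathcomp Require Import ring.
Import Order.TTheory GRing.Theory Num.Theory.
Import numFieldNormedType.Exports.
Local Open Scope ring_scope.
Local Open Scope classical_set_scope.
Section IP.
Context {R : rcfType} {V : lmodType R[i]} {ip : V -> V -> R[i]} (hip : inner_product ip).

Lemma cjE (z : R[i]) : conjc z = z^*. Proof. by []. Qed.

Lemma ipDl x y z : ip (x + y) z = ip x z + ip y z.
Proof. by case: hip. Qed.
Lemma ipZl a x y : ip (a *: x) y = a * ip x y.
Proof. by case: hip. Qed.
Lemma ipC x y : ip y x = (ip x y)^*.
Proof. by case: hip. Qed.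
Lemma ipge0 x : 0 <= ip x x.
Proof. by case: hip => _ _ _ h _; apply: h. Qed.
Lemma ip_eq0 x : ip x x = 0 -> x = 0.
Proof. by case: hip => _ _ _ _ h; apply: h. Qed.
Lemma ipDr x y z : ip x (y + z) = ip x y + ip x z.
Proof. by rewrite !(ipC _ x) ipDl raddfD. Qed.
Lemma ipZr a x y : ip x (a *: y) = a^* * ip x y.
Proof. by rewrite !(ipC _ x) ipZl rmorphM. Qed.
Lemma ip0l y : ip 0 y = 0.
Proof. by have := ipZl 0 0 y; rewrite scale0r mul0r. Qed.
Lemma ip0r y : ip y 0 = 0.
Proof. by rewrite ipC ip0l conjC0. Qed.
Lemma ipNl x y : ip (- x) y = - ip x y.
Proof. by rewrite -scaleN1r ipZl mulN1r. Qed.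
Lemma ipNr x y : ip x (- y) = - ip x y.
Proof. by rewrite -scaleN1r ipZr conjCN1 mulN1r. Qed.
Lemma ipBl x y z : ip (x - y) z = ip x z - ip y z.
Proof. by rewrite ipDl ipNl. Qed.
Lemma ipBr x y z : ip x (y - z) = ip x y - ip x z.
Proof. by rewrite ipDr ipNr. Qed.
Lemma ipxx_real x : (ip x x)^* = ip x x.
Proof. exact: geC0_conj (ipge0 x). Qed.

Lemma ip_CS x y : ip x y * (ip x y)^* <= ip x x * ip y y.
Proof.
have [y0|yn0] := eqVneq (ip y y) 0.
  by rewrite (ip_eq0 _ y0) !ip0r mul0r mulr0.
have ypos : 0 < ip y y by rewrite lt_def yn0 ipge0.
pose t := ip x y / ip y y.
have := ipge0 (x - t *: y).
rewrite !ipBl !ipBr !ipZl !ipZr (ipC x y).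
have tc : t^* = (ip x y)^* / ip y y.
  by rewrite /t rmorphM fmorphV; congr (_ * _^-1); exact: ipxx_real.
rewrite tc /t.
set a := ip x y; set b := ip y y; set c := ip x x.
have -> : c - a^* / b * a - (a / b * a^* - a / b * (a^* / b * b)) = (c * b - a * a^*) / b.
  by field.
move=> h; rewrite -subr_ge0.
have -> : c * b - a * a^* = (c * b - a * a^*) / b * b by rewrite mulfVK.
exact: mulr_ge0 h (ltW ypos).
Qed.
End IP.

Section Lim.
Context {R : rcfType}.
Lemma dn_of_n (l : R[i]) (Q : R[i] -> Prop) :
  (\forall t \near l, t != l -> Q t) -> \forall t \near l^', Q t.
Proof. by []. Qed.

Definition g1 (l n : R[i]) := (1 - `|n| ^+ 2)^-1 - (1 - `|l| ^+ 2)^-1.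
Definition g2 (l n : R[i]) := (1 - n * l^*)^-1 - (1 - l * l^*)^-1.

Lemma normlt1_ne (a b : R[i]) : `|a| < 1 -> `|b| < 1 -> 1 - a * b != 0.
Proof.
move=> ha hb; rewrite subr_eq0; apply/eqP => h.
have : `|a * b| < 1.
  rewrite normrM; apply: (le_lt_trans _ ha).
  by rewrite ler_piMr // ltW.
by rewrite -h normr1 ltxx.
Qed.

Lemma g1_cvg (l : R[i]) : `|l| < 1 -> g1 l n @[n --> l] --> 0.
Proof.
move=> hl.
have h1 : `|n| @[n --> l] --> `|l| by apply: norm_continuous.
have h2 : (`|n| * `|n|) @[n --> l] --> `|l| * `|l| by exact: (cvgM h1 h1).
have h3 : (1 - `|n| * `|n|) @[n --> l] --> 1 - `|l| * `|l|
  by exact: (cvgB (cvg_cst (1 : R[i])) h2).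
have hne : 1 - `|l| * `|l| != 0.
  by apply: (@normlt1_ne `|l| `|l|); rewrite normr_id.
have h4 : (1 - `|n| * `|n|)^-1 @[n --> l] --> (1 - `|l| * `|l|)^-1
  by exact: (cvgV hne h3).
have h5 : ((1 - `|n| * `|n|)^-1 - (1 - `|l| * `|l|)^-1) @[n --> l] --> (1 - `|l| * `|l|)^-1 - (1 - `|l| * `|l|)^-1
  by exact: (cvgB h4 (cvg_cst _)).
rewrite subrr in h5; rewrite /g1 !expr2.
exact: h5.
Qed.

Lemma g2_cvg (l : R[i]) : `|l| < 1 -> g2 l n @[n --> l] --> 0.
Proof.
move=> hl.
have h2 : n * l^* @[n --> l] --> l * l^* by exact: (@cvgMr_tmp _ _ _ _ (fun n : R[i] => n) l (l^*) (@cvg_id _ (nbhs l))).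
have h3 : (1 - n * l^*) @[n --> l] --> 1 - l * l^*
  by exact: (cvgB (cvg_cst (1 : R[i])) h2).
have hne : 1 - l * l^* != 0 by apply: normlt1_ne; rewrite ?norm_conjC.
have h4 : (1 - n * l^*)^-1 @[n --> l] --> (1 - l * l^*)^-1
  by exact: (cvgV hne h3).
have h5 : ((1 - n * l^*)^-1 - (1 - l * l^*)^-1) @[n --> l] --> (1 - l * l^*)^-1 - (1 - l * l^*)^-1
  by exact: (cvgB h4 (cvg_cst _)).
rewrite subrr in h5; exact: h5.
Qed.

Lemma limit_lemma (l L K : R[i]) (F : R[i] -> R[i]) : `|l| < 1 ->
  (forall n, `|n| < 1 -> n != l -> `|F n - L| ^+ 2 <= K * (`|g1 l n| + `|g2 l n|)) ->
  F n @[n --> l^'] --> L.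
Proof.
move=> hl hF.
have G1 : `|g1 l n| @[n --> l] --> `|0 : R[i]| by exact: (cvg_norm (g1_cvg l hl)).
have G2 : `|g2 l n| @[n --> l] --> `|0 : R[i]| by exact: (cvg_norm (g2_cvg l hl)).
have G3 : (`|g1 l n| + `|g2 l n|) @[n --> l] --> `|0 : R[i]| + `|0 : R[i]| by exact: (@cvgD _ _ _ (nbhs l) _ (fun n => `|g1 l n|) (fun n => `|g2 l n|) _ _ G1 G2).
have G0 : K * (`|g1 l n| + `|g2 l n|) @[n --> l] --> K * (`|0 : R[i]| + `|0 : R[i]|)
  by exact: (@cvgMl_tmp _ _ (nbhs l) _ (fun n => `|g1 l n| + `|g2 l n|) K _ G3).
rewrite normr0 addr0 mulr0 in G0.
apply/cvgrPdist_lt => e e0.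
have e20 : 0 < e ^+ 2 by rewrite exprn_gt0.
have H1 : \forall t \near l, `|K * (`|g1 l t| + `|g2 l t|)| < e ^+ 2
  by apply: (cvgr0_norm_lt (fun n => K * (`|g1 l n| + `|g2 l n|)) G0).
have H2 : \forall t \near l, `|l - t| < 1 - `|l|.
  apply/nbhs_normP; exists (1 - `|l|); first by rewrite /= subr_gt0.
  by move=> y /=.
apply: dn_of_n; near=> t => tl.
have ht : `|t| < 1.
  have h : `|t| <= `|l| + `|l - t|.
    by have := ler_normB l (l - t); rewrite opprB addrC subrK.
  apply: (le_lt_trans h). rewrite -ltrBrDl. near: t. exact: H2.
have := hF t ht tl.
have : `|K * (`|g1 l t| + `|g2 l t|)| < e ^+ 2 by near: t; exact: H1.
move=> h1 h2.
have h3 : `|F t - L| ^+ 2 < e ^+ 2 by apply: (le_lt_trans h2); rewrite -(ger0_norm (le_trans _ h2)) // exprn_ge0.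
rewrite distrC; rewrite ltr_pXn2r ?nnegrE ?normr_ge0 ?ltW // in h3.
Unshelve. all: by end_near.
Qed.
End Lim.

Lemma ident (F : fieldType) (X A Bb c cc dnn dnl dln dll : F) :
 (X-A)/dnn - (X-c)/dnl - (X-cc)/dln + (X-Bb)/dll + (A - c - cc + Bb)/dll
 = (X - A)*(dnn^-1 - dll^-1) - (X - c)*(dnl^-1 - dll^-1) - (X - cc)*(dln^-1 - dll^-1).
Proof. ring. Qed.

Lemma cjB {R : rcfType} (a b : R[i]) : (a - b)^* = a^* - b^*.
Proof. exact: rmorphB. Qed.
Lemma cjM {R : rcfType} (a b : R[i]) : (a * b)^* = a^* * b^*.
Proof. exact: rmorphM. Qed.
Lemma cjV {R : rcfType} (a : R[i]) : (a^-1)^* = (a^*)^-1.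
Proof. exact: fmorphV. Qed.

Lemma iC_neq0 {R : rcfType} : (iC : R[i]) != 0.
Proof. by rewrite /iC eq_complex /= oner_eq0 andbF. Qed.

Section Main.
Context {R : rcfType} {H Hp Hm : lmodType R[i]}
  (ipH : H -> H -> R[i]) (ipP : Hp -> Hp -> R[i]) (ipM : Hm -> Hm -> R[i])
  (T Tstar : H -> H) (Gp : H * H -> Hp) (Gm : H * H -> Hm)
  (B : R[i] -> Hp -> Hm) (Bstar : R[i] -> Hm -> Hp)
  (gp : R[i] -> Hp -> H * H) (gm : R[i] -> Hm -> H * H).
Context (hH : inner_product ipH) (hP : inner_product ipP) (hM : inner_product ipM).
Local Notation D := (sperp ipH (A_T T Tstar)).
Context (green : forall a b, D a -> D b ->
  kbracket ipH a b = iC * ipP (Gp a) (Gp b) - iC * ipM (Gm a) (Gm b)).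
Context (hB : weyl_function ipH T Tstar ipP ipM Gp Gm B Bstar)
  (hgp : gamma_plus ipH T Tstar Gp gp) (hgm : gamma_minus ipH T Tstar Gm gm).

Lemma adjB l : `|l| < 1 -> forall w y, ipP (Bstar l w) y = ipM w (B l y).
Proof.
move=> hl w y; have [_ _ hadj _] := hB l hl.
by rewrite (ipC hP) -hadj -(ipC hM).
Qed.

Lemma green_eq a b X Y : D a -> D b -> kbracket ipH a b = iC * X - iC * Y ->
  X - Y = ipP (Gp a) (Gp b) - ipM (Gm a) (Gm b).
Proof.
move=> Da Db; rewrite green // -!mulrBr => /(mulfI iC_neq0) ->. done.
Qed.

Lemma part1 l m x y : `|l| < 1 -> `|m| < 1 ->
  ipH (phi_plus gp l x) (phi_plus gp m y)
  = ipP (x - Bstar m (B l x)) y / (1 - l * conjc m).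
Proof.
move=> hl hm.
have [[[u eu] Da] Gpa] := hgp l hl x.
have [[[v ev] Db] Gpb] := hgp m hm y.
have [_ _ _ hGl] := hB l hl.
have [_ _ _ hGm] := hB m hm.
have E := @green_eq _ _ (ipH u v) (ipH (l *: u) (m *: v)) Da Db.
rewrite (hGl _ (conj (ex_intro _ u eu) Da)) (hGm _ (conj (ex_intro _ v ev) Db)) Gpa Gpb in E.
rewrite /kbracket eu ev /= !(ipZl hH) !(ipZr hH) in E; have {}E := E erefl.
rewrite /phi_plus eu ev /= (ipBl hP) (adjB m hm) -E cjE.
by field; apply: normlt1_ne; rewrite ?norm_conjC.
Qed.
Lemma Gp_gm l x : `|l| < 1 -> Gp (gm l x) = Bstar (conjc l) x.
Proof.
move=> hl.
have [[[u eu] Da] Gma] := hgm l hl x.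
have hl' : `|conjc l| < 1 by rewrite cjE norm_conjC.
have key : forall z, ipP (Gp (gm l x)) z = ipP (Bstar (conjc l) x) z.
  move=> z.
  have [[[v ev] Dc] Gpc] := hgp (conjc l) hl' z.
  have [_ _ _ hG] := hB _ hl'.
  have kb : kbracket ipH (gm l x) (gp (conjc l) z) =
     iC * ipH (l *: u) v - iC * ipH u (conjc l *: v) by rewrite /kbracket eu ev.
  have E := @green_eq _ _ _ _ Da Dc kb.
  rewrite (hG _ (conj (ex_intro _ v ev) Dc)) Gpc Gma in E.
  rewrite (adjB _ hl'); apply/eqP; rewrite -subr_eq0 -E (ipZl hH) (ipZr hH) cjE conjCK.
  by rewrite subrr.
apply/eqP; rewrite -subr_eq0; apply/eqP; apply: (ip_eq0 hP).
by rewrite (ipBl hP) key subrr.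
Qed.

Lemma part2 l m x y : `|l| < 1 -> `|m| < 1 ->
  ipH (phi_minus gm l x) (phi_minus gm m y)
  = ipM (x - B (conjc m) (Bstar (conjc l) x)) y / (1 - l * conjc m).
Proof.
move=> hl hm.
have hm' : `|conjc m| < 1 by rewrite cjE norm_conjC.
have [[[u eu] Da] Gma] := hgm l hl x.
have [[[v ev] Db] Gmb] := hgm m hm y.
have kb : kbracket ipH (gm l x) (gm m y) =
   iC * ipH (l *: u) (m *: v) - iC * ipH u v by rewrite /kbracket eu ev.
have E := @green_eq _ _ _ _ Da Db kb.
rewrite Gma Gmb !Gp_gm // in E.
have [_ _ hadj _] := hB _ hm'.
rewrite -hadj (ipZl hH) (ipZr hH) in E.
rewrite /phi_minus eu ev /= (ipBl hM) cjE.
rewrite cjE in E.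
have -> : ipM x y - ipM (B m^* (Bstar (conjc l) x)) y = - (l * (m^* * ipH u v) - ipH u v).
  by rewrite E opprB.
by field; apply: normlt1_ne; rewrite ?norm_conjC.
Qed.

Lemma part3 l m x y : `|l| < 1 -> `|m| < 1 -> l != conjc m ->
  ipH (phi_plus gp l x) (phi_minus gm m y)
  = ipM (B l x - B (conjc m) x) y / (l - conjc m).
Proof.
move=> hl hm hne.
have hm' : `|conjc m| < 1 by rewrite cjE norm_conjC.
have [[[u eu] Da] Gpa] := hgp l hl x.
have [[[v ev] Db] Gmb] := hgm m hm y.
have [_ _ _ hGl] := hB l hl.
have kb : kbracket ipH (gp l x) (gm m y) =
   iC * ipH u (m *: v) - iC * ipH (l *: u) v by rewrite /kbracket eu ev.
have E := @green_eq _ _ _ _ Da Db kb.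
rewrite Gmb Gp_gm // (hGl _ (conj (ex_intro _ u eu) Da)) Gpa in E.
have [_ _ hadj _] := hB _ hm'.
rewrite -hadj (ipZl hH) (ipZr hH) in E.
rewrite /phi_minus /phi_plus eu ev /= (ipBl hM).
have -> : ipM (B l x) y - ipM (B (conjc m) x) y = - (m^* * ipH u v - l * ipH u v).
  by rewrite E opprB.
rewrite cjE in hne *.
by field; rewrite subr_eq0.
Qed.
Lemma part1' l m x y : `|l| < 1 -> `|m| < 1 ->
  ipH (phi_plus gp l x) (phi_plus gp m y)
  = (ipP x y - ipM (B l x) (B m y)) / (1 - l * m^*).
Proof. by move=> hl hm; rewrite part1 // (ipBl hP) (adjB m hm). Qed.

Lemma nn_pos {n : R[i]} : `|n| < 1 -> 0 < 1 - n * n^*.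
Proof.
move=> hn; rewrite -normCK subr_gt0 exprn_ilt1 //.
Qed.

Lemma ww_bound n l x : `|n| < 1 -> `|l| < 1 ->
  ipH (phi_plus gp n x - phi_plus gp l x) (phi_plus gp n x - phi_plus gp l x)
  <= 4%:R * ipP x x * (`|g1 l n| + `|g2 l n|).
Proof.
move=> hn hl.
set X := ipP x x; set a := B n x; set b := B l x.
set A := ipM a a; set Bb := ipM b b; set c := ipM a b.
have X0 : 0 <= X by exact: ipge0.
have A0 : 0 <= A by exact: ipge0.
have B0 : 0 <= Bb by exact: ipge0.
have e1 := part1' n n x x hn hn.
have e2 := part1' n l x x hn hl.
have e3 := part1' l n x x hl hn.
have e4 := part1' l l x x hl hl.
rewrite -/X -/a -/b -/A -/Bb -/c in e1 e2 e3 e4.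
rewrite (ipC hM a b) -/c in e3.
have AX : A <= X.
  rewrite -subr_ge0; have := e1 => /(congr1 (fun z => z * (1 - n * n^*))).
  rewrite mulfVK; last by rewrite gt_eqF // nn_pos.
  move=> <-; apply: mulr_ge0; [exact: ipge0 | exact: ltW (nn_pos hn)].
have BX : Bb <= X.
  rewrite -subr_ge0; have := e4 => /(congr1 (fun z => z * (1 - l * l^*))).
  rewrite mulfVK; last by rewrite gt_eqF // nn_pos.
  move=> <-; apply: mulr_ge0; [exact: ipge0 | exact: ltW (nn_pos hl)].
have cX : `|c| <= X.
  have h := ip_CS hM a b; rewrite -/c -/A -/Bb -normCK in h.
  have h2 : A * Bb <= X ^+ 2 by rewrite expr2; apply: ler_pM.
  have := le_trans h h2; rewrite ler_pXn2r ?nnegrE //.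
have Q0 : 0 <= ipM (a - b) (a - b) / (1 - l * l^*).
  by apply: divr_ge0; [exact: ipge0 | exact: ltW (nn_pos hl)].
have eQ : ipM (a - b) (a - b) = A - c - c^* + Bb.
  rewrite (ipBl hM) !(ipBr hM) -/A -/Bb -/c (ipC hM a b) -/c.
  by rewrite opprD opprK addrA.
have ww : ipH (phi_plus gp n x - phi_plus gp l x) (phi_plus gp n x - phi_plus gp l x)
   = (X - A) / (1 - n * n^*) - (X - c) / (1 - n * l^*) - (X - c^*) / (1 - l * n^*)
     + (X - Bb) / (1 - l * l^*).
  rewrite (ipBl hH) !(ipBr hH) e1 e2 e3 e4.
  by rewrite opprD opprK addrA.
set W := ipH _ _ in ww *.
have W0 : 0 <= W by exact: ipge0.
have key : W + ipM (a - b) (a - b) / (1 - l * l^*)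
  = (X - A) * g1 l n - (X - c) * g2 l n - (X - c^*) * (g2 l n)^*.
  rewrite ww eQ ident /g1 /g2 !normCK.
  by rewrite cjB !cjV !cjB !cjM conjCK conjC1 [l^* * l]mulrC [n^* * l]mulrC.
have W1 : W <= W + ipM (a - b) (a - b) / (1 - l * l^*) by rewrite lerDl.
apply: (le_trans W1); rewrite key.
set RHS := _ - _ - _.
have R0 : 0 <= RHS by rewrite /RHS -key; exact: addr_ge0.
rewrite -(ger0_norm R0) /RHS.
apply: (le_trans (ler_normB _ _)).
apply: (le_trans (lerD (ler_normB _ _) (lexx _))).
rewrite !normrM norm_conjC.
have hA : `|X - A| <= 2%:R * X.
  by apply: (le_trans (ler_normB _ _)); rewrite (ger0_norm X0) (ger0_norm A0) mulr2n mulrDl mul1r lerD.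
have hc : `|X - c| <= 2%:R * X.
  by apply: (le_trans (ler_normB _ _)); rewrite (ger0_norm X0) mulr2n mulrDl mul1r lerD.
have hcc : `|X - c^*| <= 2%:R * X.
  by apply: (le_trans (ler_normB _ _)); rewrite (ger0_norm X0) norm_conjC mulr2n mulrDl mul1r lerD.
apply: (le_trans (lerD (lerD (ler_wpM2r (normr_ge0 _) hA) (ler_wpM2r (normr_ge0 _) hc)) (ler_wpM2r (normr_ge0 _) hcc))).
have g10 := normr_ge0 (g1 l n); have g20 := normr_ge0 (g2 l n).
set p := `|g1 l n|; set q := `|g2 l n|.
have -> : 4%:R * X * (p + q) = 2%:R * X * p + 2%:R * X * q + 2%:R * X * q + 2%:R * X * p.
  by ring.
by rewrite lerDl; apply: mulr_ge0 => //; apply: mulr_ge0.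
Qed.
Lemma part3lim l m x y : `|l| < 1 -> `|m| < 1 -> l = conjc m ->
  (ipM (B n x - B (conjc m) x) y / (n - conjc m)) @[n --> l^']
    --> ipH (phi_plus gp l x) (phi_minus gm m y).
Proof.
move=> hl hm elm.
set v := phi_minus gm m y.
apply: (@limit_lemma _ l _ (ipH v v * (4%:R * ipP x x))) => // n hn hnl.
have hne : n != conjc m by rewrite -elm.
rewrite -(part3 n m x y hn hm hne) -(ipBl hH) normCK.
apply: le_trans (ip_CS hH _ _) _.
rewrite [_ * ipH v v]mulrC -mulrA; apply: ler_wpM2l; first exact: ipge0.
exact: ww_bound.
Qed.
End Main.

Theorem proposition4p12 (R : realType)
  (H Hp Hm : lmodType R[i])
  (ipH : H -> H -> R[i]) (ipP : Hp -> Hp -> R[i]) (ipM : Hm -> Hm -> R[i])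
  (T Tstar : H -> H)
  (Gp : H * H -> Hp) (Gm : H * H -> Hm)
  (B : R[i] -> Hp -> Hm) (Bstar : R[i] -> Hm -> Hp)
  (gp : R[i] -> Hp -> H * H) (gm : R[i] -> Hm -> H * H)
  (hH : hilbert ipH) (hsep : ip_separable ipH) (hinf : infinite_dimensional H)
  (hTlin : linear T) (hTadj : adjoint_of ipH ipH T Tstar)
  (hTcontr : contractive_op ipH T) (hTcnu : cnu ipH T Tstar)
  (hbq : boundary_quadruple ipH T Tstar ipP ipM Gp Gm)
  (hB : weyl_function ipH T Tstar ipP ipM Gp Gm B Bstar)
  (hgp : gamma_plus ipH T Tstar Gp gp)
  (hgm : gamma_minus ipH T Tstar Gm gm) :
  (* (1) lambda, mu in D_+, x, y in H_+ *)
  (forall (l m : R[i]) (x y : Hp), `|l| < 1 -> `|m| < 1 ->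
     ipH (phi_plus gp l x) (phi_plus gp m y)
     = ipP (x - Bstar m (B l x)) y / (1 - l * conjc m))
  /\
  (* (2) lambda, mu in D_-, x, y in H_- *)
  (forall (l m : R[i]) (x y : Hm), `|l| < 1 -> `|m| < 1 ->
     ipH (phi_minus gm l x) (phi_minus gm m y)
     = ipM (x - B (conjc m) (Bstar (conjc l) x)) y / (1 - l * conjc m))
  /\
  (* (3) lambda in D_+, mu in D_-, x in H_+, y in H_- *)
  (forall (l m : R[i]) (x : Hp) (y : Hm), `|l| < 1 -> `|m| < 1 ->
     (l != conjc m ->
        ipH (phi_plus gp l x) (phi_minus gm m y)
        = ipM (B l x - B (conjc m) x) y / (l - conjc m))
     /\
     (l = conjc m ->
        (ipM (B n x - B (conjc m) x) y / (n - conjc m)) @[n --> l^']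
          --> ipH (phi_plus gp l x) (phi_minus gm m y))).
Proof.
have hH1 : inner_product ipH by case: hH.
case: hbq => -[[hP _] [hM _]] _ _ [_ [_ hgreen]].
split; [|split].
- move=> l m x y hl hm.
  exact: (part1 _ _ _ _ _ _ _ _ _ _ hH1 hP hM hgreen hB hgp l m x y hl hm).
- move=> l m x y hl hm.
  exact: (part2 _ _ _ _ _ _ _ _ _ _ _ hH1 hP hM hgreen hB hgp hgm l m x y hl hm).
- move=> l m x y hl hm; split.
  + exact: (part3 _ _ _ _ _ _ _ _ _ _ _ hH1 hP hM hgreen hB hgp hgm l m x y hl hm).
  + exact: (part3lim _ _ _ _ _ _ _ _ _ _ _ hH1 hP hM hgreen hB hgp hgm l m x y hl hm).
Qed.
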